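(* Let $r\ge1$ be an integer and $n=2r$ or $n=2r-1$. Let $\xi_j=e^{2\pi i(j-1)/n}$, $\zeta_j=e^{2\pi i(j-r)/n}$ for $j=1,\dots,n$. For $0<\vartheta<\frac\pi{2n}$ let $\mathbb S_n(\vartheta)=\{z:-\frac\pi2-\frac\pi n+\vartheta<\arg z<-\frac\pi2+\frac{3\pi}n-\vartheta\}$ if $n=2r$ and $\mathbb S_n(\vartheta)=\{z:-\frac\pi2-\frac\pi n+\vartheta<\arg z<-\frac\pi2+\frac{2\pi}n-\vartheta\}$ if $n=2r-1$. Then: (1.1) for $k=1,\dots,r$, $\operatorname{Im}(\xi_kz+\zeta_{r-k+1}\overline z)=0$ for all $z\in\mathbb C$; (1.2) for $k,j\in\{1,\dots,r\}$ with $k+j\ge r+2$ and all $z\in\mathbb S_n(\vartheta)$, $\operatorname{Im}(\xi_kz+\zeta_j\overline z)\ge2\sin\big(\frac{k+j-r-1}n\pi\big)\sin\vartheta\cdot|z|$; (2.1) for $k=1,\dots,n-r$, $\operatorname{Im}(\xi_{k+r}z+\zeta_{n-k+1}\overline z)=0$ for all $z\in\mathbb C$; (2.2) for $k,j\in\{1,\dots,n-r\}$ with $k+j\le n-r$ and all $z\in\mathbb S_n(\vartheta)$, $\operatorname{Im}(\xi_{k+r}z+\zeta_{j+r}\overline z)\ge2\sin\big(\frac{n-r-k-j+1}n\pi\big)\sin\vartheta\cdot|z|$ if $n=2r$, and $\ge2\sin\big(\frac{n-r-k-j+1}n\pi\big)\sin(\frac\pi n+\vartheta)\cdot|z|$ if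 $n=2r-1$. *)

(* Defs.v *)
From Stdlib Require Import Reals.
From Coquelicot Require Export Coquelicot.
Open Scope R_scope.

Definition cis (t : R) : C := (cos t, sin t).

Definition xi (n j : nat) : C := cis (2 * PI * (INR j - 1) / INR n).
Definition zeta (n r j : nat) : C := cis (2 * PI * (INR j - INR r) / INR n).

Definition is_arg (z : C) (t : R) : Prop :=
  z <> 0%C /\ - PI < t <= PI /\ z = Cmult (RtoC (Cmod z)) (cis t).

Definition sector (n r : nat) (th : R) (z : C) : Prop :=
  exists t, is_arg z t /\
    - PI / 2 - PI / INR n + th < t /\
    t < (if Nat.eqb n (2 * r) then - PI / 2 + 3 * PI / INR n - th
         else - PI / 2 + 2 * PI / INR n - th).

(* Main.v *)
Require Import Defs.
From Stdlib Require Import Reals Lra Lia.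
From Coquelicot Require Import Coquelicot.
Open Scope R_scope.

Lemma im_formula a b z :
  Im (Cplus (Cmult (cis a) z) (Cmult (cis b) (Cconj z))) =
  (sin a + sin b) * Re z + (cos a - cos b) * Im z.
Proof. destruct z as [x y]. unfold cis, Cplus, Cmult, Cconj, Im, Re; simpl. ring. Qed.

Lemma key a b S D m t : a = S + D -> b = S - D ->
  Im (Cplus (Cmult (cis a) (Cmult (RtoC m) (cis t)))
            (Cmult (cis b) (Cconj (Cmult (RtoC m) (cis t)))))
  = 2 * sin S * cos (D + t) * m.
Proof.
  intros -> ->. rewrite im_formula.
  unfold cis, Cmult, RtoC, Im, Re; simpl.
  rewrite sin_plus, sin_minus, cos_plus, cos_minus, cos_plus. ring.
Qed.

Lemma cos_bound phi c : 0 <= c -> -(PI/2 - c) <= phi <= PI/2 - c -> sin c <= cos phi.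
Proof.
  intros Hc Hp. pose proof PI_RGT_0 as HPI0. rewrite <- cos_shift.
  assert (Hx0: forall x, 0 <= x <= PI/2 - c -> cos (PI/2 - c) <= cos x).
  { intros x Hx. destruct (Req_dec x (PI/2 - c)) as [->|Hne]; [lra|].
    left. apply cos_decreasing_1; lra. }
  destruct (Rle_dec 0 phi). apply Hx0; lra.
  rewrite <- (cos_neg phi). apply Hx0; lra.
Qed.

Lemma main_bound a b S D m t c s0 : a = S + D -> b = S - D -> sin S = s0 -> 0 <= s0 ->
  0 <= m -> 0 <= c -> -(PI/2 - c) <= D + t <= PI/2 - c ->
  Im (Cplus (Cmult (cis a) (Cmult (RtoC m) (cis t)))
            (Cmult (cis b) (Cconj (Cmult (RtoC m) (cis t)))))
  >= 2 * s0 * sin c * m.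
Proof.
  intros Ha Hb Hs Hs0 Hm Hc HD. rewrite (key a b S D m t Ha Hb), Hs.
  pose proof (cos_bound _ _ Hc HD).
  assert (0 <= s0 * m) by (apply Rmult_le_pos; lra). nra.
Qed.

Lemma zero_im a b z : sin b = - sin a -> cos b = cos a ->
  Im (Cplus (Cmult (cis a) z) (Cmult (cis b) (Cconj z))) = 0.
Proof. intros H1 H2. rewrite im_formula, H1, H2. ring. Qed.

Lemma sin_nonneg x N : 0 < N -> 0 <= x <= N -> 0 <= sin (x / N * PI).
Proof.
  intros HN Hx. pose proof PI_RGT_0. set (q := x / N).
  assert (x = q * N) by (unfold q; field; lra).
  assert (0 <= q <= 1) by nra.
  apply sin_ge_0; nra.
Qed.

Theorem lemma8p4 (r n : nat) (th : R) :
  (1 <= r)%nat ->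
  (n = (2 * r)%nat \/ n = (2 * r - 1)%nat) ->
  0 < th < PI / (2 * INR n) ->
  (* (1.1) *)
  (forall k : nat, (1 <= k <= r)%nat -> forall z : C,
     Im (Cplus (Cmult (xi n k) z) (Cmult (zeta n r (r - k + 1)) (Cconj z))) = 0)
  /\
  (* (1.2) *)
  (forall k j : nat, (1 <= k <= r)%nat -> (1 <= j <= r)%nat -> (r + 2 <= k + j)%nat ->
     forall z : C, sector n r th z ->
     Im (Cplus (Cmult (xi n k) z) (Cmult (zeta n r j) (Cconj z)))
       >= 2 * sin ((INR k + INR j - INR r - 1) / INR n * PI) * sin th * Cmod z)
  /\
  (* (2.1) *)
  (forall k : nat, (1 <= k <= n - r)%nat -> forall z : C,
     Im (Cplus (Cmult (xi n (k + r)) z) (Cmult (zeta n r (n - k + 1)) (Cconj z))) = 0)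
  /\
  (* (2.2) *)
  (forall k j : nat, (1 <= k <= n - r)%nat -> (1 <= j <= n - r)%nat -> (k + j <= n - r)%nat ->
     forall z : C, sector n r th z ->
     Im (Cplus (Cmult (xi n (k + r)) z) (Cmult (zeta n r (j + r)) (Cconj z)))
       >= 2 * sin ((INR n - INR r - INR k - INR j + 1) / INR n * PI)
            * (if Nat.eqb n (2 * r) then sin th else sin (PI / INR n + th)) * Cmod z).
Proof.
  intros Hr Hn Hth.
  pose proof PI_RGT_0 as HPI.
  assert (HN : 0 < INR n) by (apply lt_0_INR; lia).
  assert (HR : 1 <= INR r) by (apply (le_INR 1); lia).
  assert (E : (Nat.eqb n (2*r) = true /\ INR n = 2 * INR r) \/
              (Nat.eqb n (2*r) = false /\ INR n = 2 * INR r - 1)).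
  { destruct Hn as [Hn|Hn].
    - left. split. apply Nat.eqb_eq; lia. rewrite Hn, mult_INR. simpl. lra.
    - right. split. apply Nat.eqb_neq; lia. rewrite Hn, minus_INR, mult_INR by lia. simpl. lra. }
  set (p := PI / INR n).
  assert (Hp : 0 < p) by (unfold p; apply Rdiv_lt_0_compat; lra).
  assert (HPIp : PI = INR n * p) by (unfold p; field; lra).
  assert (Hdiv : forall X, X / INR n * PI = X * p) by (intro X; unfold p; field; lra).
  assert (Hdiv3 : forall X, X * PI / INR n = X * p) by (intro X; unfold p; field; lra).
  split; [|split; [|split]].
  - intros k Hk z. unfold xi, zeta. apply zero_im.
    + rewrite plus_INR, minus_INR by lia. simpl.
      replace (2 * PI * (INR r - INR k + 1 - INR r) / INR n)
        with (- (2 * PI * (INR k - 1) / INR n)) by (field; lra).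
      apply sin_neg.
    + rewrite plus_INR, minus_INR by lia. simpl.
      replace (2 * PI * (INR r - INR k + 1 - INR r) / INR n)
        with (- (2 * PI * (INR k - 1) / INR n)) by (field; lra).
      apply cos_neg.
  - intros k j Hk Hj Hkj z [t [[_ [_ Hz]] [Ht1 Ht2]]].
    remember (Cmod z) as m. assert (Hm : 0 <= m) by (subst; apply Cmod_ge_0).
    rewrite Hz. unfold xi, zeta.
    assert (K2 : 2 <= INR k) by (apply (le_INR 2); lia).
    assert (J2 : 2 <= INR j) by (apply (le_INR 2); lia).
    assert (Kr : INR k <= INR r) by (apply le_INR; lia).
    assert (Jr : INR j <= INR r) by (apply le_INR; lia).
    assert (KJ : INR r + 2 <= INR k + INR j)
      by (replace 2 with (INR 2) by (simpl; lra); rewrite <- plus_INR, <- plus_INR; apply le_INR; lia).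
    apply main_bound with (S := (INR k + INR j - INR r - 1) / INR n * PI)
                          (D := (INR k - INR j + INR r - 1) / INR n * PI).
    + field; lra.
    + field; lra.
    + reflexivity.
    + apply sin_nonneg; [lra|]. destruct E as [[_ E]|[_ E]]; lra.
    + lra.
    + lra.
    + rewrite Hdiv. fold p in Ht1, Ht2. rewrite ?Hdiv3 in Ht2. rewrite HPIp in Ht1, Ht2 |- *.
      assert (0 <= p * (INR k - 2)) by (apply Rmult_le_pos; lra).
      assert (0 <= p * (INR j - 2)) by (apply Rmult_le_pos; lra).
      assert (0 <= p * (INR r - INR k)) by (apply Rmult_le_pos; lra).
      assert (0 <= p * (INR r - INR j)) by (apply Rmult_le_pos; lra).
      destruct E as [[Eb E]|[Eb E]]; rewrite Eb in Ht2; rewrite E in Ht1, Ht2 |- *;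
        split; nra.
  - intros k Hk z. unfold xi, zeta. apply zero_im.
    + rewrite !plus_INR, minus_INR by lia. simpl.
      replace (2 * PI * (INR n - INR k + 1 - INR r) / INR n)
        with (- (2 * PI * (INR k + INR r - 1) / INR n) + 2 * PI) by (field; lra).
      rewrite sin_plus, sin_2PI, cos_2PI, sin_neg. ring.
    + rewrite !plus_INR, minus_INR by lia. simpl.
      replace (2 * PI * (INR n - INR k + 1 - INR r) / INR n)
        with (- (2 * PI * (INR k + INR r - 1) / INR n) + 2 * PI) by (field; lra).
      rewrite cos_plus, sin_2PI, cos_2PI, cos_neg. ring.
  - intros k j Hk Hj Hkj z [t [[_ [_ Hz]] [Ht1 Ht2]]].
    remember (Cmod z) as m. assert (Hm : 0 <= m) by (subst; apply Cmod_ge_0).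
    rewrite Hz. unfold xi, zeta. rewrite !plus_INR.
    assert (K1 : 1 <= INR k) by (apply (le_INR 1); lia).
    assert (J1 : 1 <= INR j) by (apply (le_INR 1); lia).
    assert (KJ : INR k + INR j + INR r <= INR n)
      by (rewrite <- !plus_INR; apply le_INR; lia).
    assert (Hsin : sin ((INR k + INR j + INR r - 1) / INR n * PI)
                   = sin ((INR n - INR r - INR k - INR j + 1) / INR n * PI))
      by (rewrite <- sin_PI_x; f_equal; field; lra).
    assert (Hs0 : 0 <= sin ((INR k + INR j + INR r - 1) / INR n * PI))
      by (apply sin_nonneg; lra).
    rewrite Hsin in Hs0.
    fold p in Ht1, Ht2. rewrite ?Hdiv3 in Ht2.
    destruct E as [[Eb E]|[Eb E]]; rewrite Eb in Ht2 |- *.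
    + assert (Hn' : n = (2*r)%nat) by (apply Nat.eqb_eq; auto).
      apply main_bound with (S := (INR k + INR j + INR r - 1) / INR n * PI)
                          (D := (INR k - INR j + INR r - 1) / INR n * PI)
                          (s0 := sin ((INR n - INR r - INR k - INR j + 1) / INR n * PI)); try lra.
      all: try (field; lra).
      rewrite Hdiv. rewrite HPIp in Ht1, Ht2 |- *. rewrite E in Ht1, Ht2 |- *.
      assert (Kr : INR k + 1 <= INR r)
        by (replace 1 with (INR 1) by reflexivity; rewrite <- plus_INR; apply le_INR; lia).
      assert (Jr : INR j + 1 <= INR r)
        by (replace 1 with (INR 1) by reflexivity; rewrite <- plus_INR; apply le_INR; lia).
      assert (0 <= p * (INR k - 1)) by (apply Rmult_le_pos; lra).
      assert (0 <= p * (INR j - 1)) by (apply Rmult_le_pos; lra).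
      assert (0 <= p * (INR r - INR k - 1)) by (apply Rmult_le_pos; lra).
      assert (0 <= p * (INR r - INR j - 1)) by (apply Rmult_le_pos; lra).
      split; nra.
    + assert (Hn' : n = (2*r-1)%nat) by (destruct Hn; [apply Nat.eqb_neq in Eb; lia | auto]).
      apply main_bound with (S := (INR k + INR j + INR r - 1) / INR n * PI)
                          (D := (INR k - INR j + INR r - 1) / INR n * PI)
                          (s0 := sin ((INR n - INR r - INR k - INR j + 1) / INR n * PI)); try lra.
      all: try (field; lra).
      rewrite Hdiv. rewrite HPIp in Ht1, Ht2 |- *. rewrite E in Ht1, Ht2 |- *.
      assert (Kr : INR k + 2 <= INR r)
        by (replace 2 with (INR 2) by (simpl; lra); rewrite <- plus_INR; apply le_INR; lia).
      assert (Jr : INR j + 2 <= INR r)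
        by (replace 2 with (INR 2) by (simpl; lra); rewrite <- plus_INR; apply le_INR; lia).
      assert (0 <= p * (INR k - 1)) by (apply Rmult_le_pos; lra).
      assert (0 <= p * (INR j - 1)) by (apply Rmult_le_pos; lra).
      assert (0 <= p * (INR r - INR k - 2)) by (apply Rmult_le_pos; lra).
      assert (0 <= p * (INR r - INR j - 2)) by (apply Rmult_le_pos; lra).
      split; nra.
Qed.
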